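(* Let $\Gamma$ be a finite abelian group of order $n \ge 3$ and let $G = \mathrm{Cay}(\Gamma, S)$ be a Cayley graph on $\Gamma$. Then $\frac{\lambda_3(G)}{n} \le \frac13$.
   Context: For a group $\Gamma$ with identity $e$ and a subset $S \subseteq \Gamma$ with $e \notin S$ and $S = S^{-1}$, the Cayley graph $\mathrm{Cay}(\Gamma,S)$ has vertex set $\Gamma$, with $s_1 \sim s_2$ if and only if $s_1 s_2^{-1} \in S$. $\lambda_3$ denotes the third largest eigenvalue (with multiplicity) of the adjacency matrix. *)

(* Defs.v *)
From mathcomp Require Import all_boot all_order all_algebra all_fingroup.
Set Implicit Arguments. Unset Strict Implicit. Unset Printing Implicit Defensive.
Import Order.TTheory GRing.Theory Num.Theory.
Local Open Scope ring_scope.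

Definition cayley_adj (R : nzRingType) (gT : finGroupType) (S : {set gT})
  : 'M[R]_#|gT| :=
  \matrix_(i, j) (((enum_val i : gT) * (enum_val j : gT)^-1)%g \in S)%:R.

Definition eigenvalues_desc (R : rcfType) (m : nat) (A : 'M[R]_m) (s : seq R) :=
  char_poly A = \prod_(x <- s) ('X - x%:P) /\ sorted (>=%R) s.

(* Main.v *)
Require Import Defs.
From mathcomp Require Import all_boot all_order all_algebra all_fingroup.
From mathcomp Require Import separable cyclotomic.
From mathcomp Require Import complex.
From mathcomp Require Import ring lra.
Set Implicit Arguments. Unset Strict Implicit. Unset Printing Implicit Defensive.
Import Order.TTheory GRing.Theory Num.Theory.
Local Open Scope ring_scope.
Lemma diag_root1 (F : numClosedFieldType) n (M : 'M[F]_n) k :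
  (0 < k)%N -> M ^+ k = 1 -> diagonalizable M.
Proof.
case: n M => [|n] M k0 Mk.
  exists 1%:M; first by rewrite unitmx1.
  by apply/is_diag_mxP => -[].
apply/diagonalizableP.
have [rs Hrs] := closed_field_poly_normal ('X^k - 1 : {poly F}).
have mon : ('X^k - 1 : {poly F}) \is monic by rewrite -polyC1 monicXnsubC.
rewrite (monicP mon) scale1r in Hrs.
exists rs.
  rewrite -separable_prod_XsubC -Hrs separable_Xn_sub_1 //.
  by rewrite pnatr_eq0 -lt0n.
rewrite -Hrs; apply: mxminpoly_min.
by rewrite rmorphB /= rmorphXn /= horner_mx_X rmorph1 Mk subrr.
Qed.
Section GM.
Variables (F : nzRingType) (gT : finGroupType).
Definition Tm (g : gT) : 'M[F]_#|gT| :=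
  \matrix_(i, j) (((enum_val i : gT) * (enum_val j)^-1)%g == g)%:R.

Lemma TmM g h : Tm g *m Tm h = Tm (g * h)%g.
Proof.
apply/matrixP => i k; rewrite !mxE.
set j0 := enum_rank (g^-1 * enum_val i)%g.
rewrite (bigD1 j0) //= big1 ?addr0.
  rewrite !mxE enum_rankK invMg invgK mulgA mulgV mul1g eqxx mul1r.
  rewrite -mulgA; congr (_%:R).
  by rewrite (canF_eq (mulKVg g)).
move=> j Hj; rewrite !mxE.
case: eqP => [Eg|]; last by rewrite mul0r.
case/eqP: Hj; apply: enum_val_inj; rewrite enum_rankK -Eg.
by rewrite invMg invgK mulgKV.
Qed.

Lemma Tm1 : Tm 1%g = 1%:M.
Proof.
apply/matrixP => i j; rewrite !mxE -eq_mulgV1.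
by rewrite (inj_eq enum_val_inj).
Qed.

Lemma tr_Tm g : \tr (Tm g) = (#|gT| * (g == 1%g))%:R.
Proof.
rewrite /mxtrace (eq_bigr (fun _ => (g == 1%g)%:R)).
  by rewrite sumr_const card_ord natrM mulr_natl.
by move=> i _; rewrite mxE mulgV eq_sym.
Qed.
End GM.

Lemma Tm_exp (F : nzRingType) (gT : finGroupType) (g : gT) k :
  (Tm F g) ^+ k = Tm F (g ^+ k)%g.
Proof.
elim: k => [|k IH]; first by rewrite expr0 expg0 Tm1.
by rewrite exprS IH -mulmxE TmM expgS.
Qed.

Lemma sum_eq_in (F : nzRingType) (T : finType) (A : {set T}) (x : T) :
  \sum_(s in A) ((x == s)%:R : F) = (x \in A)%:R.
Proof.
case: (boolP (x \in A)) => xA.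
  rewrite (bigD1 x) //= eqxx big1 ?addr0 // => s /andP[_ /negbTE].
  by rewrite eq_sym => ->.
by rewrite big1 // => s sA; case: eqP => // E; rewrite E sA in xA.
Qed.

Lemma cayley_Tm (R : rcfType) (gT : finGroupType) (S : {set gT}) :
  map_mx (real_complex R) (cayley_adj R S) = \sum_(s in S) Tm R[i] s.
Proof.
apply/matrixP => i j; rewrite !mxE summxE.
rewrite (eq_bigr (fun s => (((enum_val i : gT) * (enum_val j)^-1)%g == s)%:R)).
  by rewrite sum_eq_in rmorph_nat.
by move=> s _; rewrite mxE.
Qed.

Lemma codiag_Tm (F : numClosedFieldType) (gT : finGroupType) :
  abelian [set: gT] -> codiagonalizable [seq Tm F g | g <- enum gT].
Proof.
move=> hab; apply/codiagonalizableP; split.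
  move=> _ _ /mapP[g _ ->] /mapP[h _ ->].
  rewrite /comm_mx !TmM; congr (Tm F _).
  exact: (centsP hab g (in_setT g) h (in_setT h)).
move=> _ /mapP[g _ ->].
apply: (@diag_root1 _ _ _ #|gT|).
  by apply/card_gt0P; exists 1%g.
rewrite Tm_exp; have := cyclic.expg_cardG (in_setT g); rewrite cardsT => ->.
exact: Tm1.
Qed.

Lemma char_poly_conj (F : fieldType) n (P A : 'M[F]_n) : P \in unitmx ->
  char_poly (P *m A *m invmx P) = char_poly A.
Proof.
move=> Pu; rewrite /char_poly /char_poly_mx.
set Pp := map_mx polyC P; set Qp := map_mx polyC (invmx P).
have PQ : Pp *m Qp = 1%:M by rewrite -map_mxM mulmxV // map_mx1.
have QP : Qp *m Pp = 1%:M by rewrite -map_mxM mulVmx // map_mx1.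
have -> : 'X%:M - map_mx polyC (P *m A *m invmx P)
        = Pp *m ('X%:M - map_mx polyC A) *m Qp.
  rewrite mulmxBr mulmxBl; congr (_ - _); last by rewrite !map_mxM.
  by rewrite scalar_mxC -mulmxA PQ mulmx1.
rewrite !det_mulmx mulrC mulrA -det_mulmx QP det1 mul1r.
by [].
Qed.

Section Chars.
Variables (F : numClosedFieldType) (gT : finGroupType) (P : 'M[F]_#|gT|).
Hypothesis Pu : P \in unitmx.
Hypothesis Pd : forall g, is_diag_mx (P *m Tm F g *m invmx P).

Definition chi i g := (P *m Tm F g *m invmx P) i i.

Lemma DM g h : P *m Tm F (g * h)%g *m invmx P =
  (P *m Tm F g *m invmx P) *m (P *m Tm F h *m invmx P).
Proof. by rewrite !mulmxA mulmxKV // -TmM mulmxA. Qed.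

Lemma chiM i g h : chi i (g * h)%g = chi i g * chi i h.
Proof.
rewrite /chi DM mxE (bigD1 i) //= big1 ?addr0 // => j ji.
by rewrite (is_diag_mxP (Pd g)) ?mul0r // eq_sym.
Qed.

Lemma chi1 i : chi i 1%g = 1.
Proof. by rewrite /chi Tm1 mulmx1 mulmxV // mxE eqxx. Qed.

Lemma sum_chi g : \sum_i chi i g = (#|gT| * (g == 1%g))%:R.
Proof.
rewrite -tr_Tm; have -> : \sum_i chi i g = \tr (P *m Tm F g *m invmx P) by [].
by rewrite mxtrace_mulC mulmxA mulVmx // mul1mx.
Qed.

Lemma chiX i g k : chi i (g ^+ k)%g = chi i g ^+ k.
Proof.
elim: k => [|k IH]; first by rewrite expg0 chi1 expr0.
by rewrite expgS chiM IH exprS.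
Qed.

Lemma chi_root i g : chi i g ^+ #|gT| = 1.
Proof.
rewrite -chiX; have := cyclic.expg_cardG (in_setT g); rewrite cardsT => ->.
exact: chi1.
Qed.

Lemma chiV i g : chi i g^-1%g * chi i g = 1.
Proof. by rewrite -chiM mulVg chi1. Qed.

End Chars.

Section Mult.
Variables (F : fieldType) (gT : finGroupType) (phi : gT -> F).
Hypothesis phiM : forall g h, phi (g * h)%g = phi g * phi h.
Hypothesis phi1 : phi 1%g = 1.

Lemma sum_mult_nontriv h : phi h != 1 -> \sum_g phi g = 0.
Proof.
move=> ph1.
have E : \sum_g phi g = phi h * \sum_g phi g.
  rewrite mulr_sumr (reindex_inj (mulgI h)) /=.
  by apply: eq_bigr => g _; rewrite phiM.
have : (1 - phi h) * \sum_g phi g = 0 by rewrite mulrBl mul1r -E subrr.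
move/eqP; rewrite mulf_eq0 subr_eq0 eq_sym (negbTE ph1) /=.
by move/eqP.
Qed.

Lemma sum_mult_triv : (forall g, phi g = 1) -> \sum_g phi g = #|gT|%:R.
Proof. by move=> H; rewrite (eq_bigr (fun _ => 1)) ?sumr_const // => g _; rewrite H. Qed.

Lemma sum_mult_cases : (\sum_g phi g = 0) \/ (forall g, phi g = 1).
Proof.
case: (boolP [forall g, phi g == 1]) => [/forallP H|/forallPn [h Hh]].
  by right => g; apply/eqP.
by left; apply: (sum_mult_nontriv Hh).
Qed.
End Mult.

Section Chars2.
Variables (F : numClosedFieldType) (gT : finGroupType) (P : 'M[F]_#|gT|).
Hypothesis Pu : P \in unitmx.
Hypothesis Pd : forall g, is_diag_mx (P *m Tm F g *m invmx P).
Local Notation chi := (chi P).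

Lemma chi_inj i j : (forall g, chi j g = chi i g) -> j = i.
Proof.
move=> Hji.
have n0 : (0 < #|gT|)%N by apply/card_gt0P; exists 1%g.
pose A := [set j | [forall g, chi j g == chi i g]].
have key : \sum_j \sum_g chi j g * chi i (g^-1)%g = #|gT|%:R.
  rewrite exchange_big /=.
  under eq_bigr do rewrite -mulr_suml (sum_chi Pu).
  rewrite (bigD1 1%g) //= big1 ?addr0.
    by rewrite eqxx muln1 invg1 (chi1 Pu) mulr1.
  by move=> g /negbTE ->; rewrite muln0 mul0r.
have each : forall j, \sum_g chi j g * chi i (g^-1)%g = if j \in A then #|gT|%:R else 0.
  move=> k; set phi := fun g => chi k g * chi i (g^-1)%g.
  have phiM : forall g h, phi (g * h)%g = phi g * phi h.
    move=> g h; rewrite /phi invMg !(chiM Pu Pd).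
    by ring.
  have phi1 : phi 1%g = 1 by rewrite /phi invg1 !(chi1 Pu) mulr1.
  rewrite inE; case: (boolP [forall g, _]) => [/forallP H | /forallPn [h Hh]].
    change (\sum_g phi g = #|gT|%:R); apply: (sum_mult_triv (phi := phi)) => g; rewrite /phi (eqP (H g)).
    by rewrite mulrC (chiV Pu Pd).
  change (\sum_g phi g = 0); apply: (sum_mult_nontriv phiM (h := h)); apply: contra Hh => /eqP Hh.
  apply/eqP; rewrite -[chi k h]mulr1 -(chiV Pu Pd i h) mulrA.
  by rewrite -/(phi h) Hh mul1r.
rewrite (eq_bigr _ (fun j _ => each j)) in key.
rewrite -big_mkcond /= sumr_const -[_ *+ #|A|]mulr_natr -natrM in key.
move/eqP: key; rewrite eqr_nat => /eqP key.
have A1 : #|A| = 1%N by apply/eqP; rewrite -(eqn_pmul2l n0) muln1 key.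
have iA : i \in A by rewrite inE; apply/forallP => g.
have jA : j \in A by rewrite inE; apply/forallP => g; rewrite Hji.
by move/card_le1_eqP: (eq_leq A1) => /(_ j i jA iA).
Qed.
End Chars2.

Lemma F_ge (R : rcfType) (a : R) : -1 <= a <= 1 ->
  a <= 1/3 + a/2 + 7/36 * (2 * a^+2 - 1) - 1/36 * ((2*a^+2 - 1)^+2 - 4 * a^+2 * (1 - a^+2)).
Proof.
move=> /andP[h1 h2].
have H : 0 <= (a - 1/2)^+2 * ((1 - a) * (a + 2)).
  apply: mulr_ge0; first exact: sqr_ge0.
  apply: mulr_ge0; lra.
nra.
Qed.
Lemma F_ge0 (R : rcfType) (a : R) : -1 <= a <= 1 ->
  0 <= 1/3 + a/2 + 7/36 * (2 * a^+2 - 1) - 1/36 * ((2*a^+2 - 1)^+2 - 4 * a^+2 * (1 - a^+2)).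
Proof.
move=> /andP[h1 h2].
have H : 0 <= (a + 1/2)^+2 * ((1 + a) * (2 - a)).
  apply: mulr_ge0; first exact: sqr_ge0.
  apply: mulr_ge0; lra.
nra.
Qed.

Local Notation Re := (@complex.Re _).
Local Notation Im := (@complex.Im _).
Section Cplx.
Variable R : rcfType.
Implicit Types x y z : R[i].

Lemma ReD x y : Re (x + y) = Re x + Re y. Proof. by case: x => ? ?; case: y => ? ?. Qed.
Lemma ImD x y : Im (x + y) = Im x + Im y. Proof. by case: x => ? ?; case: y => ? ?. Qed.
Lemma ReM x y : Re (x * y) = Re x * Re y - Im x * Im y. Proof. by case: x => ? ?; case: y => ? ?. Qed.
Lemma ImM x y : Im (x * y) = Re x * Im y + Im x * Re y. Proof. by case: x => ? ?; case: y => ? ?. Qed.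
Lemma Re_sum (I : Type) (r : seq I) (P : pred I) (f : I -> R[i]) :
  Re (\sum_(i <- r | P i) f i) = \sum_(i <- r | P i) Re (f i).
Proof. exact: (big_morph _ ReD). Qed.
Lemma Re_nat k : Re (k%:R : R[i]) = k%:R.
Proof. by rewrite -(rmorph_nat (real_complex R)). Qed.

Lemma unit_circle z k : (0 < k)%N -> z ^+ k = 1 -> Re z ^+ 2 + Im z ^+ 2 = 1.
Proof.
move=> k0 zk.
have : `|z| ^+ k == 1 by rewrite -normrX zk normr1.
rewrite pexpr_eq1 // => /eqP nz.
by apply: (@complexI R); rewrite add_Re2_Im2 nz expr1n.
Qed.

Lemma Re_bound z : Re z ^+ 2 + Im z ^+ 2 = 1 -> -1 <= Re z <= 1.
Proof. move=> h; apply/andP; split; nra. Qed.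

Lemma Re2 z : Re (z ^+ 2) = Re z ^+ 2 - Im z ^+ 2.
Proof. by rewrite expr2 ReM !expr2. Qed.

Lemma Re4 z : Re (z ^+ 4) = (Re z ^+ 2 - Im z ^+ 2) ^+ 2 - 4 * Re z ^+ 2 * Im z ^+ 2.
Proof.
have -> : z ^+ 4 = z ^+ 2 * z ^+ 2 by rewrite -exprD.
rewrite ReM !Re2 [z ^+ 2]expr2 ImM; ring.
Qed.

Definition Fz z := 1/3 + Re z / 2 + 7/36 * Re (z ^+ 2) - 1/36 * Re (z ^+ 4).

Lemma Fz_ge z : Re z ^+ 2 + Im z ^+ 2 = 1 -> Re z <= Fz z /\ 0 <= Fz z.
Proof.
move=> h; have hb := Re_bound h.
have hi : Im z ^+ 2 = 1 - Re z ^+ 2 by rewrite -h addrC addKr.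
rewrite /Fz Re4 Re2 hi.
have -> : Re z ^+ 2 - (1 - Re z ^+ 2) = 2 * Re z ^+ 2 - 1 by ring.
by split; [apply: F_ge | apply: F_ge0].
Qed.

Lemma sum_Fz (gT : finGroupType) (phi : gT -> R[i]) :
  \sum_g Fz (phi g) = #|gT|%:R / 3 + Re (\sum_g phi g) / 2
     + 7/36 * Re (\sum_g phi g ^+ 2) - 1/36 * Re (\sum_g phi g ^+ 4).
Proof.
rewrite /Fz !Re_sum sumrB !big_split /= sumr_const -mulr_suml -!mulr_sumr.
by rewrite -[1/3 *+ _]mulr_natl !mul1r.
Qed.

Lemma cos_bound (gT : finGroupType) (S : {set gT}) (phi : gT -> R[i]) :
  (forall g h, phi (g * h)%g = phi g * phi h) -> phi 1%g = 1 ->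
  (forall g, Re (phi g) ^+ 2 + Im (phi g) ^+ 2 = 1) ->
  forall h, phi h ^+ 2 != 1 ->
  \sum_(s in S) Re (phi s) <= #|gT|%:R / 3.
Proof.
move=> phiM phi1 hu h hh.
have le1 : \sum_(s in S) Re (phi s) <= \sum_(s in S) Fz (phi s).
  by apply: ler_sum => s _; case: (Fz_ge (hu s)).
have le2 : \sum_(s in S) Fz (phi s) <= \sum_g Fz (phi g).
  rewrite [X in _ <= X](bigID (fun g => g \in S)) /= lerDl.
  by apply: sumr_ge0 => g _; case: (Fz_ge (hu g)).
have s1 : \sum_g phi g = 0.
  apply: (sum_mult_nontriv phiM (h := h)); apply: contra hh => /eqP ->.
  by rewrite expr1n.
have phi2M : forall g h, phi (g * h)%g ^+ 2 = phi g ^+ 2 * phi h ^+ 2.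
  by move=> g k; rewrite phiM exprMn.
have s2 : \sum_g phi g ^+ 2 = 0 by apply: (sum_mult_nontriv phi2M (h := h)).
have phi4M : forall g h, phi (g * h)%g ^+ 4 = phi g ^+ 4 * phi h ^+ 4.
  by move=> g k; rewrite phiM exprMn.
have s4 : 0 <= Re (\sum_g phi g ^+ 4).
  case: (sum_mult_cases phi4M) => [->|H]; first by [].
  by rewrite (sum_mult_triv (phi := fun g => phi g ^+ 4)) // Re_nat ler0n.
have := le_trans le1 le2; rewrite sum_Fz s1 s2 => H.
apply: (le_trans H); move: s4.
have -> : Re (0 : R[i]) = 0 by [].
lra.
Qed.

Lemma sq1 (z : R[i]) : z ^+ 2 = 1 -> Im z = 0 /\ (Re z = 1 \/ Re z = -1).
Proof.
move/eqP; rewrite sqrf_eq1 => /orP[/eqP->|/eqP->]; first by split; [|left].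
by split; [rewrite /= oppr0 | right].
Qed.

Lemma real_pair (gT : finGroupType) (S : {set gT}) (phi psi : gT -> R[i]) :
  (forall g h, phi (g * h)%g = phi g * phi h) ->
  (forall g h, psi (g * h)%g = psi g * psi h) ->
  (forall g, phi g ^+ 2 = 1) -> (forall g, psi g ^+ 2 = 1) ->
  forall h1 h2 h3, phi h1 != 1 -> psi h2 != 1 -> phi h3 != psi h3 ->
  \sum_(s in S) Re (phi s) + \sum_(s in S) Re (psi s) <= #|gT|%:R / 2.
Proof.
move=> phiM psiM phi2 psi2 h1 h2 h3 n1 n2 n3.
pose G g := (1 + Re (phi g) + Re (psi g) + Re (phi g * psi g)) / 2.
have pt : forall g, Re (phi g) + Re (psi g) <= G g /\ 0 <= G g.
  move=> g; rewrite /G ReM.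
  have [i1 [->|->]] := sq1 (phi2 g); have [i2 [->|->]] := sq1 (psi2 g);
    rewrite i1 i2; split; lra.
have le1 : \sum_(s in S) Re (phi s) + \sum_(s in S) Re (psi s) <= \sum_(s in S) G s.
  by rewrite -big_split /=; apply: ler_sum => s _; case: (pt s).
have le2 : \sum_(s in S) G s <= \sum_g G g.
  rewrite [X in _ <= X](bigID (fun g => g \in S)) /= lerDl.
  by apply: sumr_ge0 => g _; case: (pt g).
have ppM : forall g h, phi (g * h)%g * psi (g * h)%g = (phi g * psi g) * (phi h * psi h).
  by move=> g h; rewrite phiM psiM; ring.
have s1 : \sum_g phi g = 0 by apply: (sum_mult_nontriv phiM (h := h1)).
have s2 : \sum_g psi g = 0 by apply: (sum_mult_nontriv psiM (h := h2)).
have s3 : \sum_g phi g * psi g = 0.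
  apply: (sum_mult_nontriv ppM (h := h3)); apply: contra n3 => /eqP E.
  have E2 : phi h3 * (phi h3 * psi h3) = phi h3 by rewrite E mulr1.
  by rewrite mulrA -expr2 phi2 mul1r in E2; rewrite E2.
have eq3 : \sum_g G g = (#|gT|%:R + Re (\sum_g phi g) + Re (\sum_g psi g)
     + Re (\sum_g phi g * psi g)) / 2.
  rewrite /G -mulr_suml !Re_sum !big_split /= sumr_const.
  by rewrite -[_ *+ #|gT|]mulr_natl mulr1.
apply: (le_trans le1); apply: (le_trans le2); rewrite eq3 s1 s2 s3.
have -> : Re (0 : R[i]) = 0 by [].
by rewrite !addr0.
Qed.
End Cplx.


Unset Implicit Arguments.
Theorem theorem3p5 (R : rcfType) (gT : finGroupType) (S : {set gT})
  (s : seq R) :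
  abelian [set: gT] -> (3 <= #|gT|)%N ->
  (1%g \notin S) -> (S^-1)%g = S ->
  eigenvalues_desc (cayley_adj R S) s ->
  s`_2 / #|gT|%:R <= 1 / 3.
Proof.
move=> hab n3 _ _ [cp srt].
have n0 : (0 < #|gT|)%N by apply/card_gt0P; exists 1%g.
have n0R : (0 : R) < #|gT|%:R by rewrite ltr0n.
have [P Pu /allP Pall] := codiag_Tm R[i] hab.
have Pd : forall g, is_diag_mx (P *m Tm R[i] g *m invmx P).
  move=> g; have := Pall _ (map_f (@Tm R[i] gT) (mem_enum _ g)).
  by rewrite /= /similar_to conjumx.
pose lam i := \sum_(s in S) chi P i s.
have cpC : char_poly (map_mx (real_complex R) (cayley_adj R S))
           = \prod_i ('X - (lam i)%:P).
  have E : P *m (\sum_(s in S) Tm R[i] s) *m invmx P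
           = \sum_(s in S) (P *m Tm R[i] s *m invmx P).
    by rewrite mulmx_sumr mulmx_suml.
  rewrite cayley_Tm -(char_poly_conj _ Pu) E char_poly_trig.
    by apply: eq_bigr => i _; rewrite summxE.
  apply: is_diag_mx_is_trig; apply/is_diag_mxP => i j ij.
  by rewrite summxE big1 // => g _; apply: (is_diag_mxP (Pd g)).
have pe : perm_eq (map (real_complex R) s) (map lam (index_enum 'I_#|gT|)).
  apply: prod_XsubC_eq; rewrite big_map.
  have := congr1 (map_poly (real_complex R)) cp.
  rewrite map_char_poly cpC map_prod_XsubC => <-.
  by rewrite big_map.
rewrite ler_pdivrMr // mulrC mul1r.
rewrite real_leNgt ?num_real // ; apply/negP => hs2.
have hpos : (0 : R) <= #|gT|%:R / 3 by rewrite divr_ge0 ?ler0n.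
pose q i := real_complex R (#|gT|%:R / 3) < lam i.
have cnt : (3 <= count q (index_enum 'I_#|gT|))%N.
  have -> : count q (index_enum 'I_#|gT|)
          = count (fun x => #|gT|%:R / 3 < x) s.
    rewrite -(count_map lam) -(seq.permP pe) count_map.
    by apply: eq_count => x /=; rewrite ltcR.
  clear cp pe; move: hs2 srt; case: s => [|a [|b [|c t]]] /=.
  - by rewrite ltNge hpos.
  - by rewrite ltNge hpos.
  - by rewrite ltNge hpos.
  move=> hc /and3P[ba cb _].
  have hb : #|gT|%:R / 3 < b by apply: (lt_le_trans hc).
  have ha : #|gT|%:R / 3 < a by apply: (lt_le_trans hb).
  by rewrite ha hb hc.
have hu : forall i g, Re (chi P i g) ^+ 2 + Im (chi P i g) ^+ 2 = 1.
  by move=> i g; apply: (unit_circle n0 (chi_root Pu Pd i g)).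
have Mi : forall i g h, chi P i (g * h)%g = chi P i g * chi P i h.
  by move=> i; apply: (chiM Pu Pd i).
have C1 : forall i, chi P i 1%g = 1 by move=> i; apply: (chi1 Pu i).
have qRe : forall i, q i -> #|gT|%:R / 3 < \sum_(s in S) Re (chi P i s).
  by move=> i; rewrite /q ltcE => /andP[_]; rewrite /lam Re_sum.
have key : forall i j, q i -> q j -> (exists g, chi P i g != 1) ->
    (exists g, chi P j g != 1) -> i = j.
  move=> i j qi qj [h1 n1] [h2 n2].
  case: (boolP [forall g, chi P i g == chi P j g]) => [/forallP E|/forallPn [h3 d3]].
    by apply: (chi_inj Pu Pd) => g; rewrite (eqP (E g)).
  exfalso.
  case: (boolP [forall g, chi P i g ^+ 2 == 1]) => [/forallP Ri | /forallPn [hi ni]]; last first.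
    have := cos_bound S (Mi i) (C1 i) (hu i) ni; have := qRe i qi; lra.
  case: (boolP [forall g, chi P j g ^+ 2 == 1]) => [/forallP Rj | /forallPn [hj nj]]; last first.
    have := cos_bound S (Mi j) (C1 j) (hu j) nj; have := qRe j qj; lra.
  have := real_pair S (Mi i) (Mi j) (fun g => eqP (Ri g)) (fun g => eqP (Rj g)) n1 n2 d3.
  have := qRe i qi; have := qRe j qj; lra.
have triv : forall i j, (forall g, chi P i g = 1) -> (forall g, chi P j g = 1) -> i = j.
  by move=> i j Hi Hj; apply: (chi_inj Pu Pd) => g; rewrite Hi Hj.
pose A := [set i | q i].
pose Tr := [set i | [forall g, chi P i g == 1]].
have cA : #|A| = count q (index_enum 'I_#|gT|).
  by rewrite -sum1_count sum1_card; apply: eq_card => i; rewrite inE.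
have c1 : (#|A :&: Tr| <= 1)%N.
  apply/card_le1_eqP => i j; rewrite !inE => /andP[_ /forallP Hi] /andP[_ /forallP Hj].
  by apply: triv => g; apply/eqP.
have c2 : (#|A :\: Tr| <= 1)%N.
  apply/card_le1_eqP => i j; rewrite !inE => /andP[/forallPn [h1 n1] qi] /andP[/forallPn [h2 n2] qj].
  by apply: (key j i) => //; [exists h2 | exists h1].
move: cnt; rewrite -cA -(cardsID Tr A).
by move: (leq_add c1 c2); case: (#|A :&: Tr| + #|A :\: Tr|)%N => [|[|[|]]].
Qed.
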